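(* Let $\Sigma$ be a finite alphabet, $M\in\mathbb N$, $Z\subseteq\Sigma^{\mathbb Z}$ a sofic shift of $M$-finite type, $A:\Sigma\to\mathbb R^{n\times n}$, and consider the switched linear system $x(k+1)=A(z_k)x(k)$, $\bar z\in Z$, with solution $\Phi(k,x_0,\bar z)$. Fix $\gamma\in[0,1)$. The following are equivalent: (1) for every $\tilde\gamma\in(\gamma,1)$ the system is uniformly exponentially stable with decay rate $\tilde\gamma$, i.e. there is $c>0$ with $|\Phi(k,x_0,\bar z)|\le c\,\tilde\gamma^k|x_0|$ for all $k\in\mathbb N,x_0\in\mathbb R^n,\bar z\in Z$; (2) for every $\tilde\gamma\in(\gamma,1)$ there exist $K\ge\max(M,1)$, $k\in\{0,\dots,K\}$, $M_1,M_2>0$ and $Q:\Sigma^K\cap\mathcal L(Z)\to\mathbb S^n_+$ such that $M_1I_n\preceq Q(w)\preceq M_2I_n$ for all $w\in S_{K,k}(Z)$ and $A(h)^\top Q(j)A(h)\prec\tilde\gamma^2Q(w)$ for all $(w,j,h)\in E_{K,k}(Z)$.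
   Context: $\Sigma^{\mathbb Z}$: bi-infinite sequences over $\Sigma$; $\mathcal L(Z)$: words $w$ of length $K$ (any $K$) such that some $\bar z\in Z$ has $(z_0,\dots,z_{K-1})=w$; a sofic shift is the set of labels of bi-infinite walks in a finite edge-labeled graph. $Z$ is of $M$-finite type if for all words $u,v,w$: $u\cdot v\in\mathcal L(Z)$, $v\cdot w\in\mathcal L(Z)$, $|v|\ge M$ imply $u\cdot v\cdot w\in\mathcal L(Z)$. For $w=(w_0,\dots,w_{K-1})$, $w^-=(w_0,\dots,w_{K-2})$, $w^+=(w_1,\dots,w_{K-1})$. Generalized De Bruijn graph $\mathcal G_{K,k}(Z)=(S_{K,k}(Z),E_{K,k}(Z))$: nodes $S_{K,k}(Z)=\Sigma^K\cap\mathcal L(Z)$; $(w,j,h)\in E_{K,k}(Z)$ iff $w^+=j^-$, $(w_0,\dots,w_{K-1},j_{K-1})\in\mathcal L(Z)$, and $h=j_{K-1}$ if $k=0$, $h=w_{K-k}$ if $1\le k\le K$. $\mathbb S^n_+$: symmetric positive definite matrices; $\preceq,\prec$ Loewner order. *)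

(* Defs.v *)
From HB Require Import structures.
From mathcomp Require Import all_boot all_order all_algebra.
From mathcomp Require Import reals.
Set Implicit Arguments. Unset Strict Implicit. Unset Printing Implicit Defensive.
Import Order.TTheory GRing.Theory Num.Theory.
Local Open Scope ring_scope.

Definition biseq (Sigma : Type) := int -> Sigma.

(* Z is sofic: the set of labels of bi-infinite walks in a finite edge-labelled
   graph with vertices 'I_nv and edges 'I_ne (edge e goes from src e to tgt e,
   labelled lab e). *)
Definition sofic (Sigma : Type) (Z : biseq Sigma -> Prop) : Prop :=
  exists (nv ne : nat) (src tgt : 'I_ne -> 'I_nv) (lab : 'I_ne -> Sigma),
    forall z : biseq Sigma,
      Z z <-> exists walk : int -> 'I_ne,
        forall i : int, tgt (walk i) = src (walk (i + 1)) /\ lab (walk i) = z i.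

Definition inL (Sigma : Type) (Z : biseq Sigma -> Prop) (w : seq Sigma) : Prop :=
  exists z, Z z /\ [seq z (Posz i) | i <- iota 0 (size w)] = w.

Definition finite_type (Sigma : Type) (Z : biseq Sigma -> Prop) (M : nat) : Prop :=
  forall u v w : seq Sigma,
    inL Z (u ++ v) -> inL Z (v ++ w) -> (M <= size v)%N -> inL Z (u ++ v ++ w).

Fixpoint Phi (R : ringType) (Sigma : Type) (n : nat) (A : Sigma -> 'M[R]_n)
    (k : nat) (x0 : 'cV[R]_n) (z : biseq Sigma) : 'cV[R]_n :=
  match k with
  | 0 => x0
  | k'.+1 => A (z (Posz k')) *m Phi A k' x0 z
  end.

Definition vnorm (R : rcfType) (n : nat) (x : 'cV[R]_n) : R :=
  Num.sqrt (\sum_(i < n) (x i 0) ^+ 2).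

Definition qform (R : ringType) (n : nat) (P : 'M[R]_n) (x : 'cV[R]_n) : R :=
  (x^T *m P *m x) 0 0.

Definition psd (R : numDomainType) (n : nat) (P : 'M[R]_n) : Prop :=
  P^T = P /\ forall x : 'cV[R]_n, 0 <= qform P x.
Definition pd (R : numDomainType) (n : nat) (P : 'M[R]_n) : Prop :=
  P^T = P /\ forall x : 'cV[R]_n, x != 0 -> 0 < qform P x.

Definition loewner_le (R : numDomainType) (n : nat) (P Q : 'M[R]_n) : Prop := psd (Q - P).
Definition loewner_lt (R : numDomainType) (n : nat) (P Q : 'M[R]_n) : Prop := pd (Q - P).

(* edges of the generalized De Bruijn graph G_{K,k}(Z):
   (w,j,h) is an edge iff w, j are nodes, w^+ = j^-, (w_0..w_{K-1}, j_{K-1}) in L(Z),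
   and h = j_{K-1} if k = 0, h = w_{K-k} if 1 <= k <= K.
   Here a stands for j_{K-1}, so that j = rcons w^+ a  (K >= 1). *)
Definition dbedge (Sigma : Type) (Z : biseq Sigma -> Prop) (K k : nat)
    (w j : K.-tuple Sigma) (h : Sigma) : Prop :=
  inL Z w /\ inL Z j /\
  exists a : Sigma,
    (j : seq Sigma) = rcons (behead w) a /\ inL Z (rcons w a) /\
    h = (if k == 0%N then a else nth a w (K - k)).

(* Main.v *)
Require Import Defs.
From HB Require Import structures.
From mathcomp Require Import all_boot all_order all_algebra.
From mathcomp Require Import reals.
From mathcomp Require Import ring lra.
Import Order.TTheory GRing.Theory Num.Theory.
Local Open Scope ring_scope.
Set Implicit Arguments. Unset Strict Implicit. Unset Printing Implicit Defensive.


Definition nsq (R : pzRingType) (n : nat) (x : 'cV[R]_n) : R := (x^T *m x) 0 0.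

Lemma nsq_sum (R : realType) n (x : 'cV[R]_n) : nsq x = \sum_i x i 0 ^+ 2.
Proof. by rewrite /nsq mxE; apply: eq_bigr => i _; rewrite mxE expr2. Qed.

Lemma nsq_ge0 (R : realType) n (x : 'cV[R]_n) : 0 <= nsq x.
Proof. by rewrite nsq_sum; apply: sumr_ge0 => i _; apply: sqr_ge0. Qed.

Lemma vnormE (R : realType) n (x : 'cV[R]_n) : vnorm x = Num.sqrt (nsq x).
Proof. by rewrite /vnorm nsq_sum. Qed.

Lemma qform1 (R : realType) n (x : 'cV[R]_n) : qform 1%:M x = nsq x.
Proof. by rewrite /qform mulmx1. Qed.

Lemma qformD (R : realType) n (P Q : 'M[R]_n) x : qform (P + Q) x = qform P x + qform Q x.
Proof. by rewrite /qform mulmxDr mulmxDl mxE. Qed.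

Lemma qformB (R : realType) n (P Q : 'M[R]_n) x : qform (P - Q) x = qform P x - qform Q x.
Proof. by rewrite /qform mulmxBr mulmxBl !mxE. Qed.

Lemma qformZ (R : realType) n (a : R) (P : 'M[R]_n) x : qform (a *: P) x = a * qform P x.
Proof. by rewrite /qform -scalemxAr -scalemxAl mxE. Qed.

Lemma qform0 (R : realType) n (x : 'cV[R]_n) : qform 0 x = 0.
Proof. by rewrite /qform mulmx0 mul0mx mxE. Qed.

Lemma qform_sum (R : realType) n (I : Type) (r : seq I) (F : I -> 'M[R]_n) x :
  qform (\sum_(i <- r) F i) x = \sum_(i <- r) qform (F i) x.
Proof.
by apply: (big_morph (fun P => qform P x)) => [P Q|]; [apply: qformD | apply: qform0].
Qed.

Lemma qform_tr (R : realType) n (P Q : 'M[R]_n) x :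
  qform (P^T *m Q *m P) x = qform Q (P *m x).
Proof. by rewrite /qform trmx_mul !mulmxA. Qed.

Lemma qform_nsq (R : realType) n (P : 'M[R]_n) x :
  qform (P^T *m P) x = nsq (P *m x).
Proof. by rewrite -(mulmx1 P^T) qform_tr qform1. Qed.

Lemma qform_scal (R : realType) n (a : R) (x : 'cV[R]_n) : qform a%:M x = a * nsq x.
Proof. by rewrite -scalemx1 qformZ qform1. Qed.

Lemma le_lower (R : realType) n (a : R) (Q : 'M[R]_n) x :
  loewner_le a%:M Q -> a * nsq x <= qform Q x.
Proof. by case=> _ /(_ x); rewrite qformB qform_scal subr_ge0. Qed.

Lemma le_upper (R : realType) n (a : R) (Q : 'M[R]_n) x :
  loewner_le Q a%:M -> qform Q x <= a * nsq x.
Proof. by case=> _ /(_ x); rewrite qformB qform_scal subr_ge0. Qed.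

Lemma lt_qf (R : realType) n (P Q : 'M[R]_n) x :
  loewner_lt P Q -> qform P x <= qform Q x.
Proof.
case=> _ H; have [->|nz] := eqVneq x 0.
  by rewrite /qform !mulmx0 mxE.
by move: (H x nz); rewrite qformB subr_gt0 => /ltW.
Qed.

Lemma coord_le (R : realType) n (x : 'cV[R]_n) j : `|x j 0| <= Num.sqrt (nsq x).
Proof.
rewrite -(sqrtr_sqr (x j 0)); rewrite ler_sqrt ?nsq_ge0 // nsq_sum.
rewrite (bigD1 j) //= lerDl; apply: sumr_ge0 => i _; apply: sqr_ge0.
Qed.

Definition mbound (R : realType) n (B : 'M[R]_n) : R := \sum_i (\sum_j `|B i j|) ^+ 2.

Lemma mbound_ge0 (R : realType) n (B : 'M[R]_n) : 0 <= mbound B.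
Proof. by apply: sumr_ge0 => i _; apply: sqr_ge0. Qed.

Lemma nsq_mul (R : realType) n (B : 'M[R]_n) x : nsq (B *m x) <= mbound B * nsq x.
Proof.
rewrite nsq_sum /mbound mulr_suml; apply: ler_sum => i _.
have hs := sqr_sqrtr (nsq_ge0 x).
rewrite -hs -exprMn mxE -real_normK ?num_real //.
rewrite lerXn2r // ?nnegrE ?normr_ge0 ?mulr_ge0 ?sumr_ge0 ?sqrtr_ge0 //.
apply: le_trans (ler_norm_sum _ _ _) _; rewrite mulr_suml; apply: ler_sum => j _.
by rewrite normrM ler_wpM2l ?normr_ge0 ?coord_le.
Qed.


Lemma sofic_shift (Sigma : Type) (Z : biseq Sigma -> Prop) (z : biseq Sigma) (s : int) :
  sofic Z -> Z z -> Z (fun i => z (i + s)).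
Proof.
case=> nv [ne [src [tgt [lab H]]]] Zz.
case/H: Zz => walk Hw; apply/H; exists (fun i => walk (i + s)) => i.
by rewrite (addrAC i 1 s); apply: Hw.
Qed.

Definition win (Sigma : Type) (z : biseq Sigma) (t L : nat) : seq Sigma :=
  mkseq (fun i => z (Posz (t + i))) L.

Lemma inL_win (Sigma : Type) (Z : biseq Sigma -> Prop) (z : biseq Sigma) t L :
  sofic Z -> Z z -> inL Z (win z t L).
Proof.
move=> So Zz; exists (fun i => z (i + Posz t)); split; first exact: (sofic_shift (Posz t) So Zz).
rewrite /win size_mkseq; apply: eq_mkseq => i /=.
by rewrite -PoszD addnC.
Qed.

Lemma Phi_bound (R : realType) (Sigma : finType) n (A : Sigma -> 'M[R]_n) (z : biseq Sigma) x0 m :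
  nsq (Phi A m x0 z) <= (1 + \sum_s mbound (A s)) ^+ m * nsq x0.
Proof.
set B := 1 + _.
have hB : forall s, mbound (A s) <= B.
  move=> s; rewrite /B (bigD1 s) //= addrCA lerDl addr_ge0 //.
  by apply: sumr_ge0 => i _; apply: mbound_ge0.
elim: m => [|m IH] /=; first by rewrite expr0 mul1r.
apply: le_trans (nsq_mul _ _) _.
rewrite exprS -mulrA; apply: ler_pM; rewrite ?mbound_ge0 ?nsq_ge0 //.
Qed.

Lemma B_ge1 (R : realType) (Sigma : finType) n (A : Sigma -> 'M[R]_n) :
  1 <= 1 + \sum_s mbound (A s).
Proof. by rewrite lerDl; apply: sumr_ge0 => i _; apply: mbound_ge0. Qed.

Lemma wsize (Sigma : Type) (z : biseq Sigma) t K : size (win z t K) == K.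
Proof. by rewrite size_mkseq. Qed.

Definition wtup (Sigma : Type) (z : biseq Sigma) t K : K.-tuple Sigma :=
  @Tuple K Sigma (win z t K) (wsize z t K).

Lemma edge_win (Sigma : Type) (Z : biseq Sigma -> Prop) (z : biseq Sigma) t K k :
  (0 < K)%N -> (k <= K)%N -> sofic Z -> Z z ->
  dbedge Z k (wtup z t K) (wtup z t.+1 K) (z (Posz (t + (K - k)))).
Proof.
move=> K0 kK So Zz; split; first exact: inL_win.
split; first exact: inL_win.
exists (z (Posz (t + K))); split; [|split].
- rewrite /= /win; apply: (@eq_from_nth _ (z 0)).
    by rewrite size_rcons size_behead !size_mkseq prednK.
  move=> i; rewrite size_mkseq => iK.
  rewrite nth_mkseq // nth_rcons size_behead size_mkseq.
  case: ltnP => [iK1|Ki].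
    by rewrite nth_behead nth_mkseq ?addSnnS // -ltn_predRL.
  have -> : i = K.-1 by apply/eqP; rewrite eqn_leq Ki andbT -ltnS prednK.
  by rewrite eqxx addSnnS prednK.
- have -> : rcons (wtup z t K) (z (Posz (t + K))) = win z t K.+1 by rewrite /win mkseqS.
  exact: inL_win.
- case: eqP => [->|/eqP k0]; first by rewrite subn0.
  by rewrite /= /win nth_mkseq // ltn_subrL K0 lt0n k0.
Qed.

Lemma sqrt_fin (R : realType) (C g a b : R) m :
  0 <= C -> 0 <= g -> 0 <= b -> a <= C * (g ^+ 2) ^+ m * b ->
  Num.sqrt a <= Num.sqrt C * g ^+ m * Num.sqrt b.
Proof.
move=> C0 g0 b0 H.
rewrite -(ger0_norm (exprn_ge0 m g0)) -sqrtr_sqr -!sqrtrM ?mulr_ge0 ?sqr_ge0 //.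
rewrite ler_sqrt ?mulr_ge0 ?sqr_ge0 ?(exprn_ge0 m g0) // -exprM mulnC exprM.
all: first [exact: H | exact: exprn_ge0].
Qed.

Lemma dir21 (R : realType) (Sigma : finType) (M n : nat)
    (Z : biseq Sigma -> Prop) (A : Sigma -> 'M[R]_n) (gt : R) :
  sofic Z -> 0 < gt -> gt < 1 ->
  (exists (K k : nat) (M1 M2 : R) (Q : K.-tuple Sigma -> 'M[R]_n),
       [/\ [/\ (maxn M 1 <= K)%N, (k <= K)%N, 0 < M1 & 0 < M2],
         (forall w : K.-tuple Sigma, inL Z w -> pd (Q w)),
         (forall w : K.-tuple Sigma, inL Z w ->
            loewner_le (M1%:M) (Q w) /\ loewner_le (Q w) (M2%:M)) &
         (forall (w j : K.-tuple Sigma) (h : Sigma), dbedge Z k w j h ->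
            loewner_lt ((A h)^T *m Q j *m A h) (gt ^+ 2 *: Q w))]) ->
  exists c : R, 0 < c /\
       forall (m : nat) (x0 : 'cV[R]_n) (z : biseq Sigma), Z z ->
         vnorm (Phi A m x0 z) <= c * gt ^+ m * vnorm x0.
Proof.
move=> So gt0 gt1 [K [k [M1 [M2 [Q [[MK kK M10 M20] Qpd Qb Qe]]]]]].
have K0 : (0 < K)%N by apply: leq_trans MK; rewrite leq_maxr.
set d := (K - k)%N. set B := 1 + \sum_s mbound (A s). set g2 := gt ^+ 2.
set C2 := (1 + M2 / M1) * B ^+ d / g2 ^+ d.
have B1 : 1 <= B := B_ge1 A.
have B0 : 0 < B := lt_le_trans ltr01 B1.
have g20 : 0 < g2 by rewrite exprn_gt0.
have g21 : g2 <= 1 by rewrite /g2 exprn_ile1 // ltW.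
have r0 : 0 < 1 + M2 / M1 by rewrite addr_gt0 ?divr_gt0.
have C20 : 0 < C2 by rewrite /C2 divr_gt0 ?exprn_gt0 ?mulr_gt0 ?exprn_gt0.
exists (Num.sqrt C2); split; first by rewrite sqrtr_gt0.
move=> m x0 z Zz.
suff H : nsq (Phi A m x0 z) <= C2 * g2 ^+ m * nsq x0.
  by rewrite !vnormE; apply: sqrt_fin => //; [exact: ltW | exact: ltW | exact: nsq_ge0].
pose V t := qform (Q (wtup z t K)) (Phi A (t + d) x0 z).
have Vstep t : V t.+1 <= g2 * V t.
  have E := edge_win t K0 kK So Zz.
  move: (@lt_qf _ _ _ _ (Phi A (t+d) x0 z) (Qe _ _ _ E)).
  by rewrite qform_tr qformZ /V addSn.
have Vt : forall t, V t <= g2 ^+ t * V 0.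
  elim => [|s IH]; first by rewrite expr0 mul1r.
  apply: le_trans (Vstep s) _; rewrite exprS -mulrA; apply: ler_wpM2l => //; exact: ltW.
have Vlow t : M1 * nsq (Phi A (t + d) x0 z) <= V t.
  by apply: le_lower; case: (Qb (wtup z t K) (inL_win t K So Zz)) => h _.
have Vup : V 0 <= M2 * nsq (Phi A d x0 z).
  by apply: le_upper; case: (Qb (wtup z 0 K) (inL_win 0 K So Zz)) => _ h.
have Pb := Phi_bound A z x0.
case: (leqP d m) => [dm|md].
- rewrite -(subnK dm); set t := (m - d)%N.
  have h1 : M1 * nsq (Phi A (t + d) x0 z) <= M2 * (g2 ^+ t * B ^+ d * nsq x0).
    apply: le_trans (Vlow t) _; apply: le_trans (Vt t) _.
    have G := exprn_ge0 t (ltW g20).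
    apply: le_trans (ler_wpM2l G Vup) _.
    rewrite -(mulrA (g2 ^+ t)) mulrCA; apply: ler_wpM2l => //.
    exact: ltW. by apply: ler_wpM2l => //; exact: Pb.
  have -> : C2 * g2 ^+ (t + d) * nsq x0 = (M1 + M2) * (g2 ^+ t * B ^+ d * nsq x0) / M1.
    rewrite /C2 exprD; field; rewrite ?expf_neq0 ?lt0r_neq0 //.
  rewrite ler_pdivlMr // mulrC.
  have X0 : 0 <= g2 ^+ t * B ^+ d * nsq x0 by rewrite !mulr_ge0 ?nsq_ge0 ?exprn_ge0 ?ltW.
  nra.
- apply: le_trans (Pb m) _; rewrite ler_wpM2r ?nsq_ge0 //.
  have h2 : 1 <= g2 ^+ m / g2 ^+ d.
    rewrite ler_pdivlMr ?exprn_gt0 // mul1r; apply: ler_wiXn2l => //; [exact: ltW | exact: ltnW].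
  have h3 : 1 <= 1 + M2 / M1 by rewrite lerDl ltW ?divr_gt0.
  have -> : C2 * g2 ^+ m = (1 + M2 / M1) * (g2 ^+ m / g2 ^+ d) * B ^+ d.
    by rewrite /C2; field; rewrite expf_neq0 ?lt0r_neq0.
  apply: le_trans (ler_weXn2l B1 (ltnW md)) _.
  rewrite ler_pMl ?exprn_gt0 //.
  by have := ler_pM ler01 ler01 h3 h2; rewrite mulr1.
Qed.


Fixpoint pm (R : realType) (Sigma : Type) n (A : Sigma -> 'M[R]_n) (s : seq Sigma) : 'M[R]_n :=
  if s is a :: s' then pm A s' *m A a else 1%:M.

Lemma pm_rcons (R : realType) (Sigma : Type) n (A : Sigma -> 'M[R]_n) s a :
  pm A (rcons s a) = A a *m pm A s.
Proof.
elim: s => [|b s IH] /=; first by rewrite mul1mx mulmx1.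
by rewrite IH mulmxA.
Qed.

Lemma Phi_pm (R : realType) (Sigma : Type) n (A : Sigma -> 'M[R]_n) i x z :
  Phi A i x z = pm A (mkseq (fun t => z (Posz t)) i) *m x.
Proof.
elim: i => [|i IH]; first by rewrite /= mul1mx.
by rewrite mkseqS pm_rcons -mulmxA -IH.
Qed.

Lemma take_word (Sigma : Type) (z : biseq Sigma) (w : seq Sigma) i :
  [seq z (Posz t) | t <- iota 0 (size w)] = w -> (i <= size w)%N ->
  take i w = mkseq (fun t => z (Posz t)) i.
Proof.
move=> <- ii; rewrite size_map size_iota in ii.
by rewrite -map_take take_iota (minn_idPl ii).
Qed.

Lemma nsq_eq0 (R : realType) n (x : 'cV[R]_n) : nsq x = 0 -> x = 0.
Proof.
rewrite nsq_sum => H; apply/matrixP => i j; rewrite ord1 mxE.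
have := @psumr_eq0P _ _ xpredT (fun i => x i 0 ^+ 2) (fun i _ => sqr_ge0 (x i 0)) H i isT.
by move/eqP; rewrite sqrf_eq0 => /eqP.
Qed.

Lemma bern (R : realType) (q : R) N : 1 <= q -> 1 + N%:R * (q - 1) <= q ^+ N.
Proof.
move=> q1; elim: N => [|N IH]; first by rewrite mul0r addr0 expr0.
rewrite exprS -natr1.
have h : 0 <= N%:R * (q - 1) by rewrite mulr_ge0 // subr_ge0.
nra.
Qed.

Lemma small_pow (R : realType) (C r : R) : 0 <= C -> 0 < r -> r < 1 ->
  exists N0 : nat, forall N, (N0 <= N)%N -> C * r ^+ N < 1.
Proof.
move=> C0 r0 r1.
set q := r^-1.
have q1 : 1 < q by rewrite /q invf_gt1.
have q10 : 0 < q - 1 by rewrite subr_gt0.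
exists (Num.Def.archi_bound (C / (q - 1))) => N le.
have hb := archi_boundP (divr_ge0 C0 (ltW q10)).
have hN : C / (q - 1) < N%:R.
  apply: lt_le_trans hb _; rewrite ler_nat //.
have hC : C < N%:R * (q - 1) by rewrite -ltr_pdivrMr.
have := bern N (ltW q1).
have -> : r = q^-1 by rewrite /q invrK.
rewrite exprVn => hq.
have qN : 0 < q ^+ N by rewrite exprn_gt0 // (lt_trans ltr01).
rewrite exprVn -[C * _]/(C / q ^+ N) ltr_pdivrMr // mul1r.
move: hq hC; rewrite /q exprVn => hq hC; lra.
Qed.

Definition Qm (R : realType) (Sigma : Type) n (A : Sigma -> 'M[R]_n) (g2 : R) N
  (w : seq Sigma) : 'M[R]_n :=
  \sum_(i < N) (g2^-1) ^+ i *: ((pm A (take i w))^T *m pm A (take i w)).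

Lemma Qm_tr (R : realType) (Sigma : Type) n (A : Sigma -> 'M[R]_n) g2 N w :
  (Qm A g2 N w)^T = Qm A g2 N w.
Proof.
have tD : forall P Q : 'M[R]_n, (P + Q)^T = P^T + Q^T.
  by move=> P Q; apply/matrixP => p q; rewrite !mxE.
rewrite /Qm (big_morph (@trmx R n n) tD (trmx0 _ _ _)); apply: eq_bigr => i _.
have -> : forall (c : R) (P : 'M[R]_n), (c *: P)^T = c *: P^T.
  by move=> c P; apply/matrixP => p q; rewrite !mxE.
by rewrite trmx_mul trmxK.
Qed.

Lemma Qm_qform (R : realType) (Sigma : Type) n (A : Sigma -> 'M[R]_n) g2 N w x :
  qform (Qm A g2 N w) x = \sum_(i < N) (g2^-1) ^+ i * nsq (pm A (take i w) *m x).
Proof.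
rewrite /Qm qform_sum; apply: eq_bigr => i _.
by rewrite qformZ qform_nsq.
Qed.

Lemma Qm_lower (R : realType) (Sigma : Type) n (A : Sigma -> 'M[R]_n) g2 N w x :
  (0 < N)%N -> 0 < g2 -> nsq x <= qform (Qm A g2 N w) x.
Proof.
case: N => // N _ g0; rewrite Qm_qform big_ord_recl /= expr0 mul1r take0 /= mul1mx lerDl.
apply: sumr_ge0 => i _; apply: mulr_ge0; last exact: nsq_ge0.
by apply: exprn_ge0; rewrite invr_ge0 ltW.
Qed.

Lemma take_rcons_le (T : Type) (s : seq T) a i : (i <= size s)%N ->
  take i (rcons s a) = take i s.
Proof.
move=> h; rewrite -cats1 take_cat; case: ltnP => // h2.
have -> : i = size s by apply/eqP; rewrite eqn_leq h h2.
by rewrite subnn take0 cats0 take_size.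
Qed.

Lemma Qm_edge (R : realType) (Sigma : Type) n (A : Sigma -> 'M[R]_n) g2
  (w' : seq Sigma) h a x : g2 != 0 ->
  qform (Qm A g2 (size w').+1 (rcons w' a)) (A h *m x) =
  g2 * (qform (Qm A g2 (size w').+1 (h :: w')) x - nsq x
        + g2^-1 ^+ (size w').+1 * nsq (pm A (h :: w') *m x)).
Proof.
move=> g0.
set N := (size w').+1. set b := g2^-1.
pose u (i : nat) := nsq (pm A (take i (h :: w')) *m x).
have E1 : qform (Qm A g2 N (rcons w' a)) (A h *m x) = \sum_(i < N) b ^+ i * u i.+1.
  rewrite Qm_qform; apply: eq_bigr => i _.
  rewrite take_rcons_le; last by rewrite -ltnS.
  by rewrite mulmxA /u /=.
have E2 : \sum_(i < N) b ^+ i * u i.+1 = g2 * \sum_(i < N) b ^+ i.+1 * u i.+1.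
  rewrite mulr_sumr; apply: eq_bigr => i _.
  by rewrite exprS !mulrA mulfV // mul1r.
rewrite E1 E2 Qm_qform.
have -> : nsq (pm A (h :: w') *m x) = u N by rewrite /u take_oversize.
have -> : nsq x = b ^+ 0 * u 0 by rewrite /u expr0 mul1r take0 /= mul1mx.
congr (_ * _).
have E3 : \sum_(i < N.+1) b ^+ i * u i = b ^+ 0 * u 0 + \sum_(i < N) b ^+ i.+1 * u i.+1.
  by rewrite big_ord_recl; congr (_ + _); apply: eq_bigr => i _; rewrite lift0.
have E4 : \sum_(i < N.+1) b ^+ i * u i = \sum_(i < N) b ^+ i * u i + b ^+ N * u N.
  by rewrite big_ord_recr.
have Eu : \sum_(i < N) b ^+ i * nsq (pm A (take i (h :: w')) *m x) = \sum_(i < N) b ^+ i * u i by [].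
rewrite Eu; lra.
Qed.

Lemma symB (R : realType) n (P Q : 'M[R]_n) : P^T = P -> Q^T = Q -> (P - Q)^T = P - Q.
Proof.
move=> hP hQ; apply/matrixP => i j.
have eP := congr1 (fun M : 'M[R]_n => M i j) hP.
have eQ := congr1 (fun M : 'M[R]_n => M i j) hQ.
rewrite /= !mxE in eP eQ *; lra.
Qed.

Lemma symZ (R : realType) n (c : R) (P : 'M[R]_n) : P^T = P -> (c *: P)^T = c *: P.
Proof.
move=> hP; apply/matrixP => i j.
have eP := congr1 (fun M : 'M[R]_n => M i j) hP.
by rewrite /= !mxE in eP *; rewrite eP.
Qed.

Lemma symT (R : realType) n (B P : 'M[R]_n) : P^T = P -> (B^T *m P *m B)^T = B^T *m P *m B.
Proof. by move=> hP; rewrite !trmx_mul trmxK hP mulmxA. Qed.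

Lemma nsq_gt0 (R : realType) n (x : 'cV[R]_n) : x != 0 -> 0 < nsq x.
Proof.
move=> nz; rewrite lt_def nsq_ge0 andbT; apply/eqP => /nsq_eq0 h.
by move: nz; rewrite h eqxx.
Qed.


Lemma dir12 (R : realType) (Sigma : finType) (M n : nat)
    (Z : biseq Sigma -> Prop) (A : Sigma -> 'M[R]_n) (gamma : R) :
  0 <= gamma ->
  (forall gt : R, gamma < gt < 1 ->
     exists c : R, 0 < c /\
       forall (k : nat) (x0 : 'cV[R]_n) (z : biseq Sigma), Z z ->
         vnorm (Phi A k x0 z) <= c * gt ^+ k * vnorm x0) ->
  (forall gt : R, gamma < gt < 1 ->
     exists (K k : nat) (M1 M2 : R) (Q : K.-tuple Sigma -> 'M[R]_n),
       [/\ [/\ (maxn M 1 <= K)%N, (k <= K)%N, 0 < M1 & 0 < M2],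
         (forall w : K.-tuple Sigma, inL Z w -> pd (Q w)),
         (forall w : K.-tuple Sigma, inL Z w ->
            loewner_le (M1%:M) (Q w) /\ loewner_le (Q w) (M2%:M)) &
         (forall (w j : K.-tuple Sigma) (h : Sigma), dbedge Z k w j h ->
            loewner_lt ((A h)^T *m Q j *m A h) (gt ^+ 2 *: Q w))]).
Proof.
move=> g0 Hst gt /andP[ggt gt1].
have gt0 : 0 < gt by apply: le_lt_trans ggt.
set rho := (gamma + gt) / 2.
have rg1 : gamma < rho by rewrite /rho; lra.
have rg2 : rho < gt by rewrite /rho; lra.
have rho0 : 0 < rho by apply: le_lt_trans rg1.
have [c [c0 Hc]] : exists c : R, 0 < c /\
       forall (k : nat) (x0 : 'cV[R]_n) (z : biseq Sigma), Z z ->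
         vnorm (Phi A k x0 z) <= c * rho ^+ k * vnorm x0.
  by apply: Hst; rewrite rg1 /=; apply: lt_trans gt1.
have bnd : forall i x z, Z z -> nsq (Phi A i x z) <= c ^+ 2 * (rho ^+ 2) ^+ i * nsq x.
  move=> i x z Zz; have := Hc i x z Zz; rewrite !vnormE => h.
  rewrite -(sqr_sqrtr (nsq_ge0 (Phi A i x z))) -(sqr_sqrtr (nsq_ge0 x)).
  apply: (@le_trans _ _ ((c * rho ^+ i * Num.sqrt (nsq x)) ^+ 2)).
    rewrite lerXn2r // nnegrE ?sqrtr_ge0 // !mulr_ge0 ?sqrtr_ge0 ?exprn_ge0 // ltW //.
  have -> : (rho ^+ 2) ^+ i = (rho ^+ i) ^+ 2 by rewrite -!exprM mulnC.
  by rewrite !exprMn.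
set g2 := gt ^+ 2. set b := g2^-1. set r := rho ^+ 2 * b.
have g20 : 0 < g2 by rewrite exprn_gt0.
have b0 : 0 < b by rewrite invr_gt0.
have r0 : 0 < r by rewrite mulr_gt0 ?exprn_gt0.
have r1 : r < 1.
  rewrite /r /b -[_ * _^-1]/(_ / _) ltr_pdivrMr // mul1r /g2 !expr2; nra.
have [N0 HN] := small_pow (sqr_ge0 c) r0 r1.
set N := maxn (maxn M 1) N0.
have N0le : (N0 <= N)%N by rewrite leq_maxr.
have MN : (maxn M 1 <= N)%N by rewrite leq_maxl.
have Npos : (0 < N)%N by apply: leq_trans MN; rewrite leq_maxr.
set M2 := \sum_(i < N) b ^+ i * c ^+ 2.
have key : forall (w : N.-tuple Sigma) i x, inL Z w -> (i <= N)%N ->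
    nsq (pm A (take i w) *m x) <= c ^+ 2 * (rho ^+ 2) ^+ i * nsq x.
  move=> w i x [z [Zz Hz]] iN.
  by rewrite (take_word Hz) ?size_tuple // -Phi_pm; apply: bnd.
have upper : forall (w : N.-tuple Sigma) x, inL Z w -> qform (Qm A g2 N w) x <= M2 * nsq x.
  move=> w x Lw; rewrite Qm_qform /M2 mulr_suml; apply: ler_sum => i _.
  rewrite -mulrA; apply: ler_wpM2l; first by rewrite exprn_ge0 // ltW.
  apply: le_trans (key w i x Lw (ltnW (ltn_ord i))) _.
  apply: ler_wpM2r; first exact: nsq_ge0.
  rewrite -[X in _ <= X]mulr1; apply: ler_wpM2l; first exact: sqr_ge0.
  by apply: exprn_ile1; rewrite ?sqr_ge0 // expr2; nra.
have M20 : 0 < M2.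
  rewrite /M2 (bigD1 (Ordinal Npos)) //= expr0 mul1r.
  have : 0 <= \sum_(i < N | i != Ordinal Npos) b ^+ i * c ^+ 2.
    by apply: sumr_ge0 => i _; apply: mulr_ge0; [apply: exprn_ge0; exact: ltW | exact: sqr_ge0].
  have : 0 < c ^+ 2 by rewrite exprn_gt0.
  lra.
exists N, N, 1, M2, (fun w : N.-tuple Sigma => Qm A g2 N w); split.
- by split; rewrite ?leqnn ?ltr01.
- move=> w Lw; split; first exact: Qm_tr.
  move=> x nz; apply: lt_le_trans (nsq_gt0 nz) _; exact: Qm_lower.
- move=> w Lw; split; split.
  + by apply: symB; [exact: Qm_tr | exact: tr_scalar_mx].
  + by move=> x; rewrite qformB qform_scal mul1r subr_ge0; apply: Qm_lower.
  + by apply: symB; [exact: tr_scalar_mx | exact: Qm_tr].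
  + by move=> x; rewrite qformB qform_scal subr_ge0; apply: upper.
- move=> w j h [Lw [Lj [a [Ej [Lwa Eh]]]]].
  have NN : (N == 0)%N = false by apply/negbTE; rewrite -lt0n.
  rewrite NN subnn in Eh.
  have Ew : (w : seq Sigma) = h :: behead w.
    rewrite Eh; move: (size_tuple w); case: (tval w) => [|c1 s] //= h0.
    by move: Npos; rewrite -h0.
  have sN : N = (size (behead w)).+1 by rewrite size_behead size_tuple prednK.
  have Qw : Qm A g2 N w = Qm A g2 (size (behead w)).+1 (h :: behead w) by rewrite -sN -Ew.
  have Qj : Qm A g2 N j = Qm A g2 (size (behead w)).+1 (rcons (behead w) a) by rewrite -sN Ej.
  split.
    apply: symB; first by apply: symZ; exact: Qm_tr.
    by apply: symT; exact: Qm_tr.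
  move=> x nz.
  rewrite qformB qformZ qform_tr Qw Qj Qm_edge ?lt0r_neq0 //.
  set q := qform _ x.
  have X0 := nsq_gt0 nz.
  set U := nsq (pm A (h :: behead w) *m x).
  have hU : U <= c ^+ 2 * (rho ^+ 2) ^+ N * nsq x.
    by rewrite /U -Ew; have := key w N x Lw (leqnn N); rewrite take_oversize ?size_tuple.
  have hB : b ^+ (size (behead w)).+1 * U <= c ^+ 2 * r ^+ N * nsq x.
    rewrite -sN /r exprMn.
    have := ler_pM (exprn_ge0 N (ltW b0)) (nsq_ge0 _) (lexx (b ^+ N)) hU.
    move=> h1; apply: le_trans h1 _; rewrite le_eqVlt; apply/orP; left; apply/eqP; ring.
  have hC := HN N N0le.
  have hD : c ^+ 2 * r ^+ N * nsq x < nsq x by nra.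
  have : 0 < nsq x - b ^+ (size (behead w)).+1 * U by lra.
  move=> h1; have := mulr_gt0 g20 h1.
  move: h1; set V := b ^+ _ * U => h1 h2.
  lra.
Qed.

Theorem mainTheorem11 (R : realType) (Sigma : finType) (M n : nat)
    (Z : biseq Sigma -> Prop) (A : Sigma -> 'M[R]_n) (gamma : R) :
  sofic Z -> finite_type Z M -> 0 <= gamma < 1 ->
  (forall gt : R, gamma < gt < 1 ->
     exists c : R, 0 < c /\
       forall (k : nat) (x0 : 'cV[R]_n) (z : biseq Sigma), Z z ->
         vnorm (Phi A k x0 z) <= c * gt ^+ k * vnorm x0)
  <->
  (forall gt : R, gamma < gt < 1 ->
     exists (K k : nat) (M1 M2 : R) (Q : K.-tuple Sigma -> 'M[R]_n),
       [/\ [/\ (maxn M 1 <= K)%N, (k <= K)%N, 0 < M1 & 0 < M2],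
         (forall w : K.-tuple Sigma, inL Z w -> pd (Q w)),
         (forall w : K.-tuple Sigma, inL Z w ->
            loewner_le (M1%:M) (Q w) /\ loewner_le (Q w) (M2%:M)) &
         (forall (w j : K.-tuple Sigma) (h : Sigma), dbedge Z k w j h ->
            loewner_lt ((A h)^T *m Q j *m A h) (gt ^+ 2 *: Q w))]).
Proof.
Proof.
move=> So FT /andP[g0 g1]; split.
  by move=> H; apply: dir12 g0 H.
move=> H gt /andP[ggt gt1]; apply: (dir21 So _ gt1 (H gt _)).
  exact: le_lt_trans ggt.
by rewrite ggt gt1.
Qed.
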